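(* Let $n$ be an even integer, $w\le n$, $i,t\le n/2$ and $s\le t$ nonnegative integers. Let ${\mathbf{a}},{\mathbf{b}},{\mathbf{c}},{\mathbf{d}}\in\mathbb{F}_3^{n/2}$ with $a_id_i-b_ic_i=1$ and $a_ic_i\neq0$ for all $i$. Let $\widetilde{{\mathbf{e}}}=({\mathbf{e}}_1,{\mathbf{e}}_2)$ be uniformly distributed over the vectors of $\mathbb{F}_3^n$ of Hamming weight $w$ (with ${\mathbf{e}}_1,{\mathbf{e}}_2\in\mathbb{F}_3^{n/2}$), and $\widetilde{{\mathbf{e}}}_V=-{\mathbf{c}}\odot{\mathbf{e}}_1+{\mathbf{a}}\odot{\mathbf{e}}_2$. Let $\widetilde q_1(i)=\mathbb{P}(|\widetilde{{\mathbf{e}}}_V|=i)$ and $\widetilde q_2(s,t)=\mathbb{P}(m_1(\widetilde{{\mathbf{e}}})=s\mid|\widetilde{{\mathbf{e}}}_V|=t)$. Then $$\widetilde q_1(i)=\frac{\binom{n/2}{i}}{\binom{n}{w}2^{w/2}}\sum_{\substack{p=0\\ w+p\equiv0\bmod 2}}^{i}\binom{i}{p}\binom{n/2-i}{(w+p)/2-i}2^{3p/2},$$ and $$\widetilde q_2(s,t)=\begin{cases}\dfrac{\binom{t}{s}\binom{n/2-t}{\frac{w+s}{2}-t}2^{3s/2}}{\sum_{p\equiv w \bmod 2}\binom{t}{p}\binom{n/2-t}{\frac{w+p}{2}-t}2^{3p/2}} & \text{if } w+s\equiv 0\bmod 2,\\ 0&\text{otherwise.}\end{cases}$$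
   Context: $|{\mathbf{x}}|$ is the Hamming weight; $\odot$ the componentwise product; for ${\mathbf{x}}\in\mathbb{F}_3^n$, $m_1({\mathbf{x}})=|\{1\le i\le n/2: |(x_i,x_{i+n/2})|=1\}|$. Binomial coefficients $\binom{m}{j}$ with $j<0$ or $j>m$ are $0$; $p$ ranges over nonnegative integers with $p\le t$. *)

(* Defs.v *)
From HB Require Import structures.
From mathcomp Require Import all_boot all_order all_algebra.
Set Implicit Arguments. Unset Strict Implicit. Unset Printing Implicit Defensive.
Import Order.TTheory GRing.Theory Num.Theory.
Local Open Scope ring_scope.

(* Vectors of F_3^m are row vectors 'rV['F_3]_m; F_3^n with n = h + h is split
   as e = (e1, e2) with e1 = lsubmx e, e2 = rsubmx e. *)

Definition hwt (m : nat) (x : 'rV['F_3]_m) : nat := #|[set j : 'I_m | x 0 j != 0]|.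

Definition cwmul (m : nat) (x y : 'rV['F_3]_m) : 'rV['F_3]_m := \row_j (x 0 j * y 0 j).

Definition m1 (h : nat) (x : 'rV['F_3]_(h + h)) : nat :=
  #|[set j : 'I_h | (((x ord0 (lshift h j) != 0%R) + (x ord0 (rshift h j) != 0%R))%N == 1%N)]|.

Definition eV (h : nat) (a c : 'rV['F_3]_h) (e : 'rV['F_3]_(h + h)) : 'rV['F_3]_h :=
  - cwmul c (lsubmx e) + cwmul a (rsubmx e).

Definition wsupport (h w : nat) : {set 'rV['F_3]_(h + h)} :=
  [set e | hwt e == w].

Definition uprob (R : fieldType) (h w : nat) (A : pred 'rV['F_3]_(h + h)) : R :=
  #|[set e in wsupport h w | A e]|%:R / #|wsupport h w|%:R.

Definition ucprob (R : fieldType) (h w : nat) (A B : pred 'rV['F_3]_(h + h)) : R :=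
  @uprob R h w (fun e => A e && B e) / @uprob R h w B.

Definition binz (m : nat) (j : int) : nat :=
  if (j < 0)%R then 0%N else 'C(m, `|j|%N).

Definition q1 (R : fieldType) (h w : nat) (a c : 'rV['F_3]_h) (i : nat) : R :=
  @uprob R h w (fun e => hwt (eV a c e) == i).

Definition q2 (R : fieldType) (h w : nat) (a c : 'rV['F_3]_h) (s t : nat) : R :=
  @ucprob R h w (fun e => m1 e == s) (fun e => hwt (eV a c e) == t).

(* Main.v *)
Require Import Defs.
From HB Require Import structures.
From mathcomp Require Import all_boot all_order all_algebra.
From mathcomp Require Import zify ring lra.
Import Order.TTheory GRing.Theory Num.Theory.
Local Open Scope ring_scope.

Definition T3 := ('F_3 * 'F_3)%type.
Definition pw (x : T3) : nat := ((x.1 != 0%R) + (x.2 != 0%R))%N.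
Definition ev (al ga : 'F_3) (x : T3) : 'F_3 := - ga * x.1 + al * x.2.
Definition fsize (bS bP bK : bool) : nat :=
  if bP then 4 else if bS then 2 else if bK then 2 else 1.

Lemma F3_cases (x : 'F_3) : [\/ x = 0, x = 1 | x = -1].
Proof.
case: x => -[|[|[|m]]] Hm //.
- by constructor 1; apply: val_inj.
- by constructor 2; apply: val_inj.
- by constructor 3; apply: val_inj.
Qed.
Lemma F3_nz (x : 'F_3) : x != 0 -> x = 1 \/ x = -1.
Proof. by case: (F3_cases x) => ->; [rewrite eqxx| left | right]. Qed.

Lemma brute1 al ga (x : T3) : al != 0 -> ga != 0 ->
  ((pw x == 1%N) ==> (ev al ga x != 0%R)) &&
  (pw x == ((pw x == 1%N) + 2 * ((pw x != 1%N) && (ev al ga x != 0%R)) + 2 * ((pw x == 2) && (ev al ga x == 0%R)))%N).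
Proof.
move=> /F3_nz[]-> /F3_nz[]->; case: x => x1 x2;
 (case: (F3_cases x1) => ->; case: (F3_cases x2) => ->); vm_compute; reflexivity.
Qed.

Lemma card_T3 (A : pred T3) : #|A| = \sum_(i : 'F_3) \sum_(j : 'F_3) (A (i, j) : nat).
Proof.
rewrite pair_big /= -sum1_card big_mkcond /=.
by apply: eq_bigr => -[i j] _.
Qed.

Lemma brute2 al ga bS bP bK : al != 0 -> ga != 0 -> (bP ==> bS) -> ~~ (bK && bS) ->
  #|[pred x : T3 | ((ev al ga x != 0%R) == bS) && ((pw x == 1%N) == bP) && (((pw x == 2) && (ev al ga x == 0%R)) == bK)]| = fsize bS bP bK.
Proof.
move=> /F3_nz[]-> /F3_nz[]->; rewrite card_T3 !big_ord_recl !big_ord0;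
 case: bS; case: bP; case: bK => // _ _; vm_compute; reflexivity.
Qed.

Lemma card_F3 (A : pred 'F_3) : #|A| = \sum_(i : 'F_3) (A i : nat).
Proof. by rewrite -sum1_card big_mkcond. Qed.

Lemma brute3 (b : bool) : #|[pred x : 'F_3 | (x != 0) == b]| = (2 ^ b)%N.
Proof. by rewrite card_F3 !big_ord_recl big_ord0; case: b; vm_compute. Qed.

Lemma sum1_pred (X : finType) (P : pred X) : (\sum_(x | P x) 1)%N = #|[set x | P x]|.
Proof. by rewrite -sum1_card; apply: eq_bigl => x; rewrite inE. Qed.

Lemma sum_const_pred (X : finType) (P : pred X) (c : nat) :
  (\sum_(x | P x) c)%N = (#|[set x | P x]| * c)%N.
Proof. by rewrite -sum1_pred big_distrl /=; apply: eq_bigr => x _; rewrite mul1n. Qed.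

Lemma sum_mem (X : finType) (A : {set X}) : (\sum_x (x \in A : nat))%N = #|A|.
Proof. by rewrite -sum1_card [RHS]big_mkcond; apply: eq_bigr => x _; case: (x \in A). Qed.

Lemma card_bij (A B : finType) (F : A -> B) (G : B -> A) :
  cancel F G -> cancel G F -> forall P : pred B, #|[set x | P (F x)]| = #|[set y | P y]|.
Proof.
move=> FK GK P; rewrite -(card_imset _ (can_inj FK)); apply: eq_card => y.
apply/imsetP/idP.
  by move=> [x]; rewrite inE => Px ->; rewrite inE.
by rewrite inE => Py; apply: (ex_intro2 _ _ (G y)); rewrite ?inE GK.
Qed.

Lemma card_partition (X U : finType) (phi : X -> U) (C : pred X) (C' : pred U) :
  (forall x, C x = C' (phi x)) ->
  #|[set x | C x]| = (\sum_(u | C' u) #|[set x | phi x == u]|)%N.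
Proof.
move=> HC; rewrite -sum1_pred (partition_big phi C') => [|x]; last by rewrite HC.
apply: eq_bigr => u Cu; rewrite sum1_pred; apply: eq_card => x; rewrite !inE.
by case E: (phi x == u); rewrite ?andbF // andbT HC (eqP E).
Qed.

Definition pairv h (e : 'rV['F_3]_(h + h)) : {ffun 'I_h -> T3} :=
  [ffun j => (e 0 (lshift h j), e 0 (rshift h j))].
Definition unpairv h (f : {ffun 'I_h -> T3}) : 'rV['F_3]_(h + h) :=
  row_mx (\row_j (f j).1) (\row_j (f j).2).

Arguments pairv {h}.
Arguments unpairv {h}.

Lemma pairvK h : cancel (@pairv h) (@unpairv h).
Proof.
move=> e; rewrite /unpairv -[RHS]hsubmxK; congr row_mx; apply/rowP => j;
  by rewrite !mxE ffunE /=.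
Qed.

Lemma unpairvK h : cancel (@unpairv h) (@pairv h).
Proof.
move=> f; apply/ffunP => j; rewrite ffunE /unpairv row_mxEl row_mxEr !mxE.
by case: (f j).
Qed.

Lemma card_sum_pred (X : finType) (P : pred X) : #|[set x | P x]| = (\sum_x (P x : nat))%N.
Proof. by rewrite -sum1_card big_mkcond; apply: eq_bigr => x _; rewrite inE; case: (P x). Qed.

Lemma hwt_pr h (e : 'rV['F_3]_(h + h)) : hwt e = (\sum_j pw (pairv e j))%N.
Proof.
rewrite /hwt card_sum_pred big_split_ord /= -big_split /=.
by apply: eq_bigr => j _; rewrite ffunE.
Qed.

Section Stats.
Variables (h : nat) (a c : 'rV['F_3]_h).

Definition Sf (f : {ffun 'I_h -> T3}) := [set j | ev (a 0 j) (c 0 j) (f j) != 0].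
Definition Pf (f : {ffun 'I_h -> T3}) := [set j | pw (f j) == 1%N].
Definition Kf (f : {ffun 'I_h -> T3}) := [set j | (pw (f j) == 2) && (ev (a 0 j) (c 0 j) (f j) == 0)].

Lemma hwt_eV e : hwt (eV a c e) = #|Sf (pairv e)|.
Proof.
apply: eq_card => j; rewrite !inE !mxE ffunE /ev /=.
by rewrite mulNr.
Qed.

Lemma m1_pr e : m1 e = #|Pf (pairv e)|.
Proof. by apply: eq_card => j; rewrite !inE ffunE /pw. Qed.

Hypothesis ac : forall j, a 0 j * c 0 j != 0.
Lemma a_nz j : a 0 j != 0. Proof. by have := ac j; rewrite mulf_eq0 negb_or => /andP[]. Qed.
Lemma c_nz j : c 0 j != 0. Proof. by have := ac j; rewrite mulf_eq0 negb_or => /andP[]. Qed.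

Lemma PS (f : {ffun 'I_h -> T3}) : Pf f \subset Sf f.
Proof.
apply/subsetP => j; rewrite !inE => Hj.
by have /andP[/implyP H _] := brute1 _ _ (f j) (a_nz j) (c_nz j); apply: H.
Qed.

Lemma KS (f : {ffun 'I_h -> T3}) : [disjoint Kf f & Sf f].
Proof.
rewrite -setI_eq0; apply/eqP/setP => j; rewrite !inE.
by case: (ev _ _ _ == 0); rewrite ?andbF.
Qed.

Lemma sum_pw (f : {ffun 'I_h -> T3}) : (\sum_j pw (f j))%N = (#|Pf f| + 2 * #|Sf f :\: Pf f| + 2 * #|Kf f|)%N.
Proof.
rewrite -!sum_mem !big_distrr -!big_split /=; apply: eq_bigr => j _.
have /andP[_ /eqP E] := brute1 _ _ (f j) (a_nz j) (c_nz j).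
by rewrite E !inE.
Qed.

End Stats.
Arguments Sf {h}.
Arguments Pf {h}.
Arguments Kf {h}.

Lemma fsizeE bS bP bK : (bP ==> bS) -> ~~ (bK && bS) ->
  fsize bS bP bK = (4 ^ bP * 2 ^ (~~ bP && bS) * 2 ^ bK)%N.
Proof. by case: bS; case: bP; case: bK. Qed.

Lemma prod_family (I Y : finType) (F : I -> pred Y) :
  #|(family F : simpl_pred {ffun I -> Y})| = (\prod_j #|F j|)%N.
Proof. by rewrite card_family foldrE big_map big_enum. Qed.

Section Count.
Variables (h : nat) (a c : 'rV['F_3]_h).
Hypothesis ac : forall j, a 0 j * c 0 j != 0.

Definition phi (f : {ffun 'I_h -> T3}) := ((Sf a c f, Pf f), Kf a c f).
Definition valid (u : ({set 'I_h} * {set 'I_h}) * {set 'I_h}) :=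
  (u.1.2 \subset u.1.1) && [disjoint u.2 & u.1.1].

Lemma fiber u : valid u ->
  #|[set f | phi f == u]| = (4 ^ #|u.1.2| * 2 ^ #|u.1.1 :\: u.1.2| * 2 ^ #|u.2|)%N.
Proof.
case: u => [[S0 P0] K0] /andP[/= sPS dKS].
pose F := fun j : 'I_h => [pred x : T3 | ((ev (a 0 j) (c 0 j) x != 0) == (j \in S0)) && ((pw x == 1%N) == (j \in P0)) && (((pw x == 2) && (ev (a 0 j) (c 0 j) x == 0)) == (j \in K0))].
have -> : #|[set f | phi f == ((S0, P0), K0)]| = #|(family F : simpl_pred {ffun 'I_h -> T3})|.
  apply: eq_card => f; rewrite inE; apply/eqP/familyP => [[ES EP EK] j | H].
    by rewrite /F !inE -ES -EP -EK !inE !eqxx.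
  rewrite /phi; congr ((_,_),_); apply/setP => j; have := H j; rewrite /F !inE.
  - by case/andP => /andP[/eqP -> _] _.
  - by case/andP => /andP[_ /eqP ->] _.
  - by case/andP => _ /eqP ->.
rewrite prod_family.
have dj : forall j, ~~ ((j \in K0) && (j \in S0)).
  by move=> j; have := dKS; rewrite -setI_eq0 => /eqP/setP/(_ j); rewrite !inE => ->.
have pj : forall j, (j \in P0) ==> (j \in S0).
  by move=> j; apply/implyP => /(subsetP sPS).
under eq_bigr => j _.
  rewrite (brute2 _ _ _ _ _ (@a_nz _ _ _ ac j) (@c_nz _ _ _ ac j) (pj j) (dj j)).
  rewrite (fsizeE _ _ _ (pj j) (dj j)).
  over.
rewrite /= !big_split /= -!expn_sum -!sum_mem.
by congr (_ ^ _ * _ ^ _ * _ ^ _)%N; apply: eq_bigr => j _; rewrite ?inE.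
Qed.
End Count.
Arguments valid {h}.
Arguments phi {h}.

Section Triple.
Variable h : nat.
Lemma triple_count i s k :
  #|[set u : ({set 'I_h} * {set 'I_h}) * {set 'I_h} |
     ((#|u.1.1| == i) && ((u.1.2 \subset u.1.1) && (#|u.1.2| == s))) &&
     ([disjoint u.2 & u.1.1] && (#|u.2| == k))]| = ('C(h, i) * 'C(i, s) * 'C(h - i, k))%N.
Proof.
transitivity (\sum_(S : {set 'I_h} | #|S| == i) \sum_(P : {set 'I_h} | (P \subset S) && (#|P| == s))
   \sum_(K : {set 'I_h} | [disjoint K & S] && (#|K| == k)) 1)%N.
  rewrite pair_big_dep /= pair_big_dep /= sum1_pred; apply: eq_card => -[[S P] K].
  by rewrite !inE.
have inner : forall S : {set 'I_h}, (\sum_(K : {set 'I_h} | [disjoint K & S] && (#|K| == k)) 1)%N = 'C(h - #|S|, k).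
  move=> S; rewrite sum1_pred.
  have -> : #|[set K : {set 'I_h} | [disjoint K & S] && (#|K| == k)]| = #|[set K : {set 'I_h} | K \subset ~: S & #|K| == k]|.
    by apply: eq_card => K; rewrite !inE disjoints_subset.
  by rewrite cards_draws cardsCs setCK card_ord.
under eq_bigr => S HS.
  under eq_bigr => P _ do rewrite inner (eqP HS).
  rewrite sum_const_pred.
  have -> : #|[set P : {set 'I_h} | (P \subset S) && (#|P| == s)]| = 'C(i, s).
    by rewrite -(eqP HS) -cards_draws; apply: eq_card => P; rewrite !inE.
  over.
rewrite /= sum_const_pred.
have -> : #|[set S : {set 'I_h} | #|S| == i]| = 'C(h, i).
  by rewrite -[in RHS](card_ord h) -card_draws.
by rewrite mulnA.
Qed.
End Triple.

Definition Nf (h w i s : nat) : nat :=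
  if ~~ odd (w + s) then ('C(h, i) * ('C(i, s) * binz (h - i) ((w + s)./2%:Z - i%:Z)) * 2 ^ (s + (w + s)./2))%N
  else 0%N.

Section CountF.
Variables (h : nat) (a c : 'rV['F_3]_h).
Hypothesis ac : forall j, a 0 j * c 0 j != 0.

Lemma count_f w i s :
  #|[set f : {ffun 'I_h -> T3} | ((\sum_j pw (f j))%N == w) && ((#|Pf f| == s) && (#|Sf a c f| == i))]|
  = Nf h w i s.
Proof.
pose C' := fun u : ({set 'I_h} * {set 'I_h}) * {set 'I_h} => valid u &&
  ((#|u.1.2| + 2 * #|u.1.1 :\: u.1.2| + 2 * #|u.2| == w)%N && ((#|u.1.2| == s) && (#|u.1.1| == i))).
rewrite (@card_partition _ _ (phi a c) _ C'); last first.
  by move=> f; rewrite /C' /valid /phi /= (@PS _ _ _ ac) KS (@sum_pw _ _ _ ac).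
under eq_bigr => u /andP[Vu _] do rewrite (@fiber _ _ _ ac) //.
have key : forall u, C' u -> [/\ (s <= i)%N, #|u.1.1| = i, #|u.1.2| = s, #|u.1.1 :\: u.1.2| = (i - s)%N
       & (s + 2 * (i - s) + 2 * #|u.2| = w)%N].
  move=> -[[S P] K]; rewrite /C' /valid /= => /andP[/andP[sPS _] /andP[/eqP E /andP[/eqP Es /eqP Ei]]].
  have le := subset_leq_card sPS.
  have cD : #|S :\: P| = (i - s)%N by rewrite cardsD (setIidPr sPS) Ei Es.
  by split => //; [rewrite -Es -Ei | rewrite -cD -Es].
have hw := odd_double_half (w + s); rewrite -muln2 in hw.
set m := (w + s)./2 in hw *.
case E : [&& ~~ odd (w + s), (s <= i)%N & (i <= m)%N]; last first.
  rewrite big1; last first.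
    move=> u /key [le _ _ _ Hw]; move: E; rewrite le /=.
    case: (odd (w + s)) hw => /= hw; lia.
  rewrite /Nf -/m; case: (odd (w + s)) E => //= E.
  case: (leqP s i) E => /= [_ /negbT | lt _]; last by rewrite (bin_small lt) !(mul0n, muln0).
  move=> H; have lt : (m < i)%N by rewrite ltnNge.
  by rewrite /binz ifT ?muln0 ?mul0n // subr_lt0 ltz_nat.
case/and3P: E => ev le1 le2.
rewrite (negbTE ev) /= in hw.
set k := (m - i)%N.
transitivity (\sum_(u : ({set 'I_h} * {set 'I_h}) * {set 'I_h} | ((#|u.1.1| == i) && ((u.1.2 \subset u.1.1) && (#|u.1.2| == s))) &&
     ([disjoint u.2 & u.1.1] && (#|u.2| == k))) (4 ^ s * 2 ^ (i - s) * 2 ^ k))%N.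
  apply: eq_big => [[[S P] K]|u Cu].
    rewrite /C' /valid /=.
    apply/idP/idP.
      move=> /[dup] H /andP[/andP[-> ->] _]; have [_ -> -> _ Hw] := key ((S, P), K) H.
      rewrite !eqxx /=; apply/eqP; rewrite /k; move: Hw; rewrite /=; lia.
    move=> /andP[/andP[/eqP Ei /andP[sPS /eqP Es]] /andP[dKS /eqP Ek]].
    rewrite sPS dKS Ei Es !eqxx /= cardsD (setIidPr sPS) Ei Es Ek /k andbT.
    apply/eqP; lia.
  have [_ Ei Es ED Hw] := key u Cu; rewrite Es ED; suff -> : #|u.2| = k by []; rewrite /k; set K := #|u.2| in Hw *; move: hw Hw le1 le2; clear; rewrite /m; move: ((w + s)./2) => M; lia.
rewrite sum_const_pred triple_count /Nf (negbTE ev) /= -/m.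
have -> : binz (h - i) (m%:Z - i%:Z) = 'C(h - i, k).
  by rewrite /binz subzn // ltrz0 absz_nat.
have E2 : (4 ^ s * 2 ^ (i - s) * 2 ^ k = 2 ^ (s + m))%N.
  rewrite -[4%N]/(2 ^ 2)%N -expnM -!expnD; congr (2 ^ _)%N.
  rewrite /k; move: hw le1 le2; rewrite /m; move: ((w + s)./2) => M; lia.
by rewrite E2 !mulnA.
Qed.
End CountF.

Lemma card_wt m w : #|[set e : 'rV['F_3]_m | hwt e == w]| = ('C(m, w) * 2 ^ w)%N.
Proof.
pose F := fun e : 'rV['F_3]_m => [ffun k => e 0 k].
pose G := fun g : {ffun 'I_m -> 'F_3} => \row_k g k.
have FK : cancel F G by move=> e; apply/rowP => k; rewrite /G /F mxE ffunE.
have GK : cancel G F by move=> g; apply/ffunP => k; rewrite /G /F ffunE mxE.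
transitivity #|[set e | (fun g : {ffun 'I_m -> 'F_3} => #|[set k | g k != 0]| == w) (F e)]|.
  apply: eq_card => e; rewrite !inE /hwt; congr (_ == _).
  by apply: eq_card => k; rewrite !inE ffunE.
rewrite (@card_bij _ _ _ _ FK GK (fun g : {ffun 'I_m -> 'F_3} => #|[set k | g k != 0]| == w)).
rewrite (@card_partition _ _ (fun g : {ffun 'I_m -> 'F_3} => [set k | g k != 0]) _ (fun A => #|A| == w)) //.
under eq_bigr => A HA.
  pose Fm := fun k : 'I_m => [pred x : 'F_3 | (x != 0) == (k \in A)].
  have -> : #|[set g : {ffun 'I_m -> 'F_3} | [set k | g k != 0] == A]| = #|(family Fm : simpl_pred {ffun 'I_m -> 'F_3})|.
    apply: eq_card => g; rewrite inE; apply/eqP/familyP => [E k | H].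
      by rewrite /Fm -E !inE.
    by apply/setP => k; have := H k; rewrite /Fm !inE => /eqP.
  rewrite prod_family.
  under eq_bigr => k _ do rewrite brute3.
  rewrite -expn_sum sum_mem (eqP HA).
  over.
by rewrite /= sum_const_pred card_draws card_ord mulnC.
Qed.

Section Ecount.
Variables (h w : nat) (a c : 'rV['F_3]_h).
Hypothesis ac : forall j, a 0 j * c 0 j != 0.

Lemma cnt_e i s :
  #|[set e in wsupport h w | (m1 e == s) && (hwt (eV a c e) == i)]| = Nf h w i s.
Proof.
transitivity #|[set e | (fun f : {ffun 'I_h -> T3} =>
   ((\sum_j pw (f j))%N == w) && ((#|Pf f| == s) && (#|Sf a c f| == i))) (pairv e)]|.
  by apply: eq_card => e; rewrite !inE hwt_pr m1_pr hwt_eV.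
by rewrite (@card_bij _ _ _ _ (@pairvK h) (@unpairvK h) (fun f : {ffun 'I_h -> T3} =>
   ((\sum_j pw (f j))%N == w) && ((#|Pf f| == s) && (#|Sf a c f| == i)))) (@count_f _ _ _ ac).
Qed.

Lemma cnt1_e i :
  #|[set e in wsupport h w | hwt (eV a c e) == i]| = (\sum_(0 <= p < i.+1) Nf h w i p)%N.
Proof.
transitivity #|[set e | (fun f : {ffun 'I_h -> T3} =>
   ((\sum_j pw (f j))%N == w) && (#|Sf a c f| == i)) (pairv e)]|.
  by apply: eq_card => e; rewrite !inE hwt_pr hwt_eV.
rewrite (@card_bij _ _ _ _ (@pairvK h) (@unpairvK h) (fun f : {ffun 'I_h -> T3} =>
   ((\sum_j pw (f j))%N == w) && (#|Sf a c f| == i))) card_sum_pred.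
under [RHS]eq_bigr => p _ do rewrite -(@count_f _ _ _ ac) card_sum_pred.
rewrite exchange_big /=; apply: eq_bigr => f _.
case Hw: (_ == w) => /=; last by rewrite big1.
case Hi: (#|Sf a c f| == i) => /=; last by rewrite big1 // => p _; rewrite andbF.
have le : (#|Pf f| < i.+1)%N by rewrite ltnS -(eqP Hi) subset_leq_card // (@PS _ _ _ ac).
rewrite (eq_bigr (fun p => if p == #|Pf f| then 1%N else 0%N)); last first.
  by move=> p _; rewrite andbT eq_sym; case: (_ == _).
by rewrite -big_mkcond big_nat1_eq /= le.
Qed.
End Ecount.

Lemma div_cancel (R : fieldType) (K D x S : R) : K != 0 -> D != 0 ->
  (K * x / D) / (K * S / D) = x / S.
Proof.
move=> HK HD; rewrite !invfM !invrK.
have E1 := mulfV HK; have E2 := mulfV HD.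
transitivity (x / S * (K / K) * (D / D)); first by ring.
by rewrite E1 E2 !mulr1.
Qed.

Theorem proposition5 (R : rcfType) (h w i t s : nat)
  (a b c d : 'rV['F_3]_h) :
  (w <= h + h)%N -> (i <= h)%N -> (t <= h)%N -> (s <= t)%N ->
  (forall j, a 0 j * d 0 j - b 0 j * c 0 j = 1) ->
  (forall j, a 0 j * c 0 j != 0) ->
  @q1 R h w a c i =
    ('C(h, i)%:R / ('C(h + h, w)%:R * Num.sqrt 2 ^+ w)) *
    \sum_(0 <= p < i.+1 | ~~ odd (w + p))
       ('C(i, p) * binz (h - i) ((w + p)./2%:Z - i%:Z))%:R * Num.sqrt 2 ^+ (3 * p)
  /\
  @q2 R h w a c s t =
    (if ~~ odd (w + s) then
       (('C(t, s) * binz (h - t) ((w + s)./2%:Z - t%:Z))%:R * Num.sqrt 2 ^+ (3 * s)) /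
       (\sum_(0 <= p < t.+1 | ~~ odd (w + p))
          ('C(t, p) * binz (h - t) ((w + p)./2%:Z - t%:Z))%:R * Num.sqrt 2 ^+ (3 * p))
     else 0).
Proof.
move=> Hw Hi Ht Hst _ ac.
set r := Num.sqrt (2 : R).
have r2 : r ^+ 2 = 2 by rewrite sqr_sqrtr // ler0n.
have rnz : r != 0 by rewrite sqrtr_eq0 -ltNge ltr0n.
have rwnz : r ^+ w != 0 by rewrite expf_neq0.
have D : (#|wsupport h w|%:R : R) = 'C(h + h, w)%:R * r ^+ w * r ^+ w.
  by rewrite /wsupport card_wt natrM natrX -r2 -exprM mul2n -addnn exprD mulrA.
have Cnz : ('C(h + h, w)%:R : R) != 0 by rewrite pnatr_eq0 -lt0n bin_gt0.
have Dnz : ('C(h + h, w)%:R * r ^+ w * r ^+ w : R) != 0 by rewrite !mulf_neq0.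
have NfE : forall i p, ((Nf h w i p)%:R : R) = if ~~ odd (w + p) then
    'C(h, i)%:R * r ^+ w * (('C(i, p) * binz (h - i) ((w + p)./2%:Z - i%:Z))%:R * r ^+ (3 * p)) else 0.
  move=> i0 p; rewrite /Nf; case: ifP => ev //.
  have hw := odd_double_half (w + p); rewrite (negbTE ev) add0n -muln2 in hw.
  rewrite !natrM.
  have -> : (2 ^ (p + (w + p)./2))%N%:R = r ^+ w * r ^+ (3 * p) :> R.
    rewrite natrX -r2 -exprM -exprD; congr (_ ^+ _).
    move: hw; move: ((w + p)./2) => M; lia.
  ring.
split.
  rewrite /q1 /uprob (@cnt1_e _ _ _ _ ac) natr_sum D mulr_suml mulr_sumr [RHS]big_mkcond /=.
  apply: eq_bigr => p _; rewrite NfE; case: ifP => _; last by rewrite mul0r.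
  by field; rewrite rwnz Cnz.
rewrite /q2 /ucprob /uprob (@cnt_e _ _ _ _ ac) (@cnt1_e _ _ _ _ ac) natr_sum NfE.
have Knz : ('C(h, t)%:R * r ^+ w : R) != 0.
  by rewrite mulf_neq0 // pnatr_eq0 -lt0n bin_gt0.
under eq_bigr => p _ do rewrite NfE.
rewrite -big_mkcond /= -mulr_sumr.
case: ifP => _; last by rewrite !mul0r.
by rewrite div_cancel // D.
Qed.
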